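(* For any positive integers $k,\Delta$ with $3 \le k\le \Delta$ and any positive integers $x_1,\dots,x_k$ with $1\le x_j \le \Delta$, $$ \frac{2}{k-1} \sum_{1\le i<j \le k} \frac1{x_i+x_j+2k-4} \le \sum_{j=1}^k \frac1{x_j+k} \le 2\,\frac{\Delta+2k-3}{k^2-1} \sum_{1\le i<j \le k} \frac1{x_i+x_j+2k-4} \, . $$ *)

(* Defs.v *)
From mathcomp Require Import all_boot all_order all_algebra.
Set Implicit Arguments. Unset Strict Implicit. Unset Printing Implicit Defensive.

(* Main.v *)
Require Import Defs.
From mathcomp Require Import all_boot all_order all_algebra.
From mathcomp Require Import zify ring lra.
Import Order.TTheory GRing.Theory Num.Theory.
Local Open Scope ring_scope.

Lemma conc (R : realFieldType) (c lo hi g0 g1 gb t : R) :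
  0 < hi - lo -> lo <= t -> t <= hi -> 0 <= g0 -> 0 <= g1 -> 0 <= c ->
  (hi - lo) * gb = (hi - t) * g0 + (t - lo) * g1 + c * (hi - lo) * (t - lo) * (hi - t) ->
  0 <= gb.
Proof.
move=> hp h1 h2 h0 h1' hc e.
have : 0 <= (hi - lo) * gb.
  rewrite e; apply: addr_ge0; first apply: addr_ge0.
  - by apply: mulr_ge0 => //; rewrite subr_ge0.
  - by apply: mulr_ge0 => //; rewrite subr_ge0.
  - apply: mulr_ge0; last by rewrite subr_ge0.
    apply: mulr_ge0; last by rewrite subr_ge0.
    by apply: mulr_ge0 => //; apply: ltW.
by rewrite pmulr_rge0.
Qed.

Definition FF (R : realFieldType) (K DD a b : R) :=
  2 * (DD + 2 * K - 3) * (a * b) - (K + 1) * (a + b) * (a + b - 4).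
Arguments FF {R}.

Lemma FF_ge0 (R : realFieldType) (K DD a b : R) :
  3 <= K -> K <= DD -> K + 1 <= a -> a <= DD + K -> K + 1 <= b -> b <= DD + K ->
  0 <= FF K DD a b.
Proof.
move=> hK hKD ha1 ha2 hb1 hb2.
have hM : 0 < (DD + K) - (K + 1) by lra.
have hc : 0 <= K + 1 by lra.
have Fmm : 0 <= FF K DD (K+1) (K+1).
  have -> : FF K DD (K+1) (K+1) = 2 * (K+1)^+2 * (DD - 1) by rewrite /FF; ring.
  apply: mulr_ge0; last lra.
  by apply: mulr_ge0 => //; apply: sqr_ge0.
have FMm : 0 <= FF K DD (DD+K) (K+1).
  have -> : FF K DD (DD+K) (K+1) = (K+1) * (DD + 2*K - 3) * (DD - 1) by rewrite /FF; ring.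
  by apply: mulr_ge0; [apply: mulr_ge0|]; lra.
have FmM : 0 <= FF K DD (K+1) (DD+K).
  have -> : FF K DD (K+1) (DD+K) = (K+1) * (DD + 2*K - 3) * (DD - 1) by rewrite /FF; ring.
  by apply: mulr_ge0; [apply: mulr_ge0|]; lra.
have FMM : 0 <= FF K DD (DD+K) (DD+K).
  have -> : FF K DD (DD+K) (DD+K) = 2 * (DD + K) *
     (2 * K * (K - 3) + (DD - K) * (3 * K - 5) + (DD - K) ^+ 2 + 4) by rewrite /FF; ring.
  apply: mulr_ge0; first lra.
  have h1 : 0 <= 2 * K * (K - 3) by apply: mulr_ge0; lra.
  have h2 : 0 <= (DD - K) * (3 * K - 5) by apply: mulr_ge0; lra.
  have h3 := sqr_ge0 (DD - K).
  lra.
have Fam : 0 <= FF K DD a (K+1).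
  apply: (@conc _ (K+1) (K+1) (DD+K) (FF K DD (K+1) (K+1)) (FF K DD (DD+K) (K+1)) _ a) => //.
  by rewrite /FF; ring.
have FaM : 0 <= FF K DD a (DD+K).
  apply: (@conc _ (K+1) (K+1) (DD+K) (FF K DD (K+1) (DD+K)) (FF K DD (DD+K) (DD+K)) _ a) => //.
  by rewrite /FF; ring.
apply: (@conc _ (K+1) (K+1) (DD+K) (FF K DD a (K+1)) (FF K DD a (DD+K)) _ b) => //.
by rewrite /FF; ring.
Qed.

Lemma castC (R : realFieldType) (k xi xj : nat) : (3 <= k)%N ->
  ((xi + xj + 2 * k - 4)%:R : R) = (xi + k)%:R + (xj + k)%:R - 4.
Proof.
move=> hk; apply: (addIr 4); rewrite subrK -!natrD; congr (_%:R); lia.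
Qed.

Lemma pairL (R : realFieldType) (k xi xj : nat) : (3 <= k)%N -> (1 <= xi)%N -> (1 <= xj)%N ->
  2 * ((xi + xj + 2 * k - 4)%:R : R)^-1 <= ((xi + k)%:R)^-1 + ((xj + k)%:R)^-1.
Proof.
move=> hk h1 h2; rewrite castC //.
set A : R := (xi + k)%:R; set B : R := (xj + k)%:R.
have hA : 4 <= A by rewrite /A (ler_nat R 4); lia.
have hB : 4 <= B by rewrite /B (ler_nat R 4); lia.
have e : A^-1 + B^-1 - 2 * (A + B - 4)^-1 =
   (A * (A - 4) + B * (B - 4)) / (A * B * (A + B - 4)).
  field; apply/and3P; split; apply/negP => /eqP; lra.
have : 0 <= (A * (A - 4) + B * (B - 4)) / (A * B * (A + B - 4)).
  apply: divr_ge0.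
    by apply: addr_ge0; apply: mulr_ge0; lra.
  by apply: mulr_ge0; [apply: mulr_ge0|]; lra.
rewrite -e; lra.
Qed.

Lemma pairU (R : realFieldType) (k D xi xj : nat) : (3 <= k)%N -> (k <= D)%N ->
  (1 <= xi <= D)%N -> (1 <= xj <= D)%N ->
  ((xi + k)%:R : R)^-1 + ((xj + k)%:R)^-1 <=
  2 * (D + 2 * k - 3)%:R / (k%:R + 1) * ((xi + xj + 2 * k - 4)%:R)^-1.
Proof.
move=> hk hkD /andP[h1 h1'] /andP[h2 h2']; rewrite castC //.
have eD : ((D + 2 * k - 3)%:R : R) = D%:R + 2 * k%:R - 3.
  apply: (addIr 3); rewrite subrK -!natrM -!natrD; congr (_%:R); lia.
rewrite eD.
set A : R := (xi + k)%:R; set B : R := (xj + k)%:R.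
set K : R := k%:R; set DD : R := D%:R.
have hK : 3 <= K by rewrite /K (ler_nat R 3).
have hKD : K <= DD by rewrite /K /DD ler_nat.
have eA : A = xi%:R + K by rewrite /A natrD.
have eB : B = xj%:R + K by rewrite /B natrD.
have i1 : 1 <= xi%:R :> R by rewrite ler1n.
have i2 : 1 <= xj%:R :> R by rewrite ler1n.
have i3 : xi%:R <= DD by rewrite /DD ler_nat.
have i4 : xj%:R <= DD by rewrite /DD ler_nat.
have hA1 : K + 1 <= A by lra.
have hA2 : A <= DD + K by lra.
have hB1 : K + 1 <= B by lra.
have hB2 : B <= DD + K by lra.
have hF := @FF_ge0 _ K DD A B hK hKD hA1 hA2 hB1 hB2.
have e : 2 * (DD + 2 * K - 3) / (K + 1) * (A + B - 4)^-1 - (A^-1 + B^-1) =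
   FF K DD A B / ((K + 1) * A * B * (A + B - 4)).
  rewrite /FF; field; apply/and4P; split; apply/negP => /eqP; lra.
have : 0 <= FF K DD A B / ((K + 1) * A * B * (A + B - 4)).
  apply: divr_ge0 => //.
  by apply: mulr_ge0; [apply: mulr_ge0; [apply: mulr_ge0|]|]; lra.
rewrite -e; lra.
Qed.

Lemma sum_pairs (R : realFieldType) (k : nat) (f : 'I_k -> R) :
  \sum_(i < k) \sum_(j < k | (i < j)%N) (f i + f j) = (k%:R - 1) * \sum_(j < k) f j.
Proof.
under eq_bigr do rewrite big_split /=.
rewrite big_split /=.
have -> : \sum_(i < k) \sum_(j < k | (i < j)%N) f j =
          \sum_(i < k) \sum_(j < k | (j < i)%N) f i.
  under eq_bigr do rewrite big_mkcond /=.
  rewrite exchange_big /=.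
  by apply: eq_bigr => i _; rewrite [RHS]big_mkcond.
rewrite -big_split /= mulr_sumr; apply: eq_bigr => i _.
have : \sum_(j < k) f i = k%:R * f i by rewrite sumr_const card_ord mulr_natl.
rewrite (bigD1 i) //= => e.
have -> : \sum_(j < k | (i < j)%N) f i + \sum_(j < k | (j < i)%N) f i =
          \sum_(j < k | j != i) f i.
  rewrite [X in X + _ = _]big_mkcond [X in _ + X = _]big_mkcond [RHS]big_mkcond -big_split /=.
  apply: eq_bigr => j _.
  case: (ltngtP i j) => h.
  - have h1 : (j < i)%N = false by lia.
    have h2 : (j != i) by rewrite neq_ltn h orbT.
    by rewrite ?h ?h1 h2 ?addr0 ?add0r.
  - have h1 : (i < j)%N = false by lia.
    have h2 : (j != i) by rewrite neq_ltn h.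
    by rewrite ?h ?h1 h2 ?addr0 ?add0r.
  - have -> : j = i by apply: val_inj.
    by rewrite ?ltnn eqxx ?addr0.
have e' : \sum_(j < k | j != i) f i = k%:R * f i - f i by rewrite -e; ring.
by rewrite e'; ring.
Qed.

Theorem lemma3p3 (R : realFieldType) (k Delta : nat) (x : 'I_k -> nat) :
  (3 <= k)%N -> (k <= Delta)%N ->
  (forall j, 1 <= x j <= Delta)%N ->
  let S := \sum_(i < k) \sum_(j < k | (i < j)%N)
             ((x i + x j + 2 * k - 4)%:R : R)^-1 in
  2 / (k%:R - 1) * S <= \sum_(j < k) ((x j + k)%:R : R)^-1
  /\ \sum_(j < k) ((x j + k)%:R : R)^-1
     <= 2 * (Delta + 2 * k - 3)%:R / (k%:R ^+ 2 - 1) * S.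
Proof.
move=> hk hkD hx S.
pose f := fun j : 'I_k => ((x j + k)%:R : R)^-1.
have hsum := @sum_pairs R k f.
have hK : 3 <= k%:R :> R by rewrite (ler_nat R 3).
have K1 : 0 < k%:R - 1 :> R by lra.
have low : 2 * S <= (k%:R - 1) * \sum_(j < k) f j.
  rewrite -hsum /S mulr_sumr; apply: ler_sum => i _.
  rewrite mulr_sumr; apply: ler_sum => j _.
  have /andP[? _] := hx i; have /andP[? _] := hx j.
  exact: pairL.
have up : (k%:R - 1) * \sum_(j < k) f j
          <= 2 * (Delta + 2 * k - 3)%:R / (k%:R + 1) * S.
  rewrite -hsum /S mulr_sumr; apply: ler_sum => i _.
  rewrite mulr_sumr; apply: ler_sum => j _.
  exact: pairU.
split.
- have -> : 2 / (k%:R - 1) * S = (k%:R - 1)^-1 * (2 * S) :> R.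
    by field; apply/negP => /eqP; lra.
  by rewrite ler_pdivrMl.
- have -> : 2 * (Delta + 2 * k - 3)%:R / (k%:R ^+ 2 - 1) * S =
     (k%:R - 1)^-1 * (2 * (Delta + 2 * k - 3)%:R / (k%:R + 1) * S) :> R.
    field; apply/and3P; split; apply/negP => /eqP; nra.
  by rewrite ler_pdivlMl.
Qed.
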